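(* Let $n\ge 1$, $\nu>0$, and let $\alpha_u,\alpha_y\ge 0$ with $\max\{\alpha_u,\alpha_y\}>0$. Let $M\in\mathbb{R}^{n\times n}$ be diagonal with positive diagonal entries, let $L\in\mathbb{R}^{n\times n}$ with $L+L^T$ positive semidefinite, and let $\Pi_k$ be an $n\times n$ diagonal matrix with diagonal entries in $\{0,1\}$. Set $\gamma_1=\frac{\alpha_y^2\nu}{\alpha_y^2\nu+\alpha_u^2}$, $\gamma_2=\frac{\alpha_u^2}{\alpha_y^2\nu+\alpha_u^2}$, and assume $\gamma_1=\gamma_2=\tfrac12$. Define $$\mathbb{S}_k=\nu LM^{-1}L^T+M-\frac{1}{\alpha_y^2\nu+\alpha_u^2}(\alpha_y\nu LM^{-1}-\alpha_u I)\Pi_k M\Pi_k(\alpha_y\nu LM^{-1}-\alpha_u I)^T,$$ $L_1=\sqrt{\nu}L(I-\gamma_1\Pi_k)^{1/2}+(I-\gamma_2\Pi_k)^{1/2}M$ and $\widehat{\mathbb{S}}_k=L_1M^{-1}L_1^T$. Then every eigenvalue $\lambda$ of the pencil $(\mathbb{S}_k,\widehat{\mathbb{S}}_k)$ (i.e. $\mathbb{S}_kx=\lambda\widehat{\mathbb{S}}_kx$ for some $x\ne0$) satisfies $\lambda\in\left[\tfrac12,\,3\right]$.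
   Context: Square roots of nonnegative diagonal matrices are taken entrywise. *)

(* Defs.v *)
From HB Require Import structures.
From mathcomp Require Import all_boot all_order all_algebra.
From mathcomp Require Import reals.
Set Implicit Arguments. Unset Strict Implicit. Unset Printing Implicit Defensive.
Import Order.TTheory GRing.Theory Num.Theory.
Local Open Scope ring_scope.

Definition psd (R : realType) (n : nat) (A : 'M[R]_n) : Prop :=
  forall x : 'cV[R]_n, 0 <= (x^T *m A *m x) 0 0.

Definition diag_sqrt (R : realType) (n : nat) (A : 'M[R]_n) : 'M[R]_n :=
  \matrix_(i, j) (if i == j then Num.sqrt (A i i) else 0).

Definition pencil_eigenvalue (R : realType) (n : nat) (A B : 'M[R]_n)
  (lambda : R) : Prop :=
  exists2 x : 'cV[R]_n, x != 0 & A *m x = lambda *: (B *m x).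

(* Main.v *)
Require Import Defs.
From HB Require Import structures.
From mathcomp Require Import all_boot all_order all_algebra.
From mathcomp Require Import reals.
From mathcomp Require Import ring lra.
Import Order.TTheory GRing.Theory Num.Theory.
Local Open Scope ring_scope.
Lemma qf_diag (R : comPzRingType) n (a b : 'cV[R]_n) (d : 'rV[R]_n) :
  (a^T *m diag_mx d *m b) 0 0 = \sum_i a i 0 * d 0 i * b i 0.
Proof.
rewrite mul_mx_diag !mxE; apply: eq_bigr => i _; rewrite !mxE //.
Qed.

Lemma invmx_diag (R : fieldType) n (d : 'rV[R]_n) :
  (forall i, d 0 i != 0) -> invmx (diag_mx d) = diag_mx (\row_i (d 0 i)^-1).
Proof.
move=> nz.
have H : diag_mx d *m diag_mx (\row_i (d 0 i)^-1) = 1%:M.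
  rewrite mulmx_diag; apply/matrixP => i j; rewrite !mxE.
  case: eqP => [->|_]; last by rewrite !mulr0n.
  by rewrite mulr1n divff.
have [U _] := mulmx1_unit H.
by rewrite -[invmx _]mulmx1 -H mulmxA mulVmx // mul1mx.
Qed.

Lemma diag_sqrt_E (R : realType) n (g : R) (p : 'rV[R]_n) :
  diag_sqrt (1%:M - g *: diag_mx p) = diag_mx (\row_i Num.sqrt (1 - g * p 0 i)).
Proof.
apply/matrixP => i j; rewrite !mxE.
case: eqP => [->|_]; last by rewrite mulr0n.
by rewrite ?mxE eqxx ?mulr1n.
Qed.

Lemma mx11_comb (R : comPzRingType) (a b : R) (A B C : 'M[R]_1) :
  (a *: A + B - b *: C) 0 0 = a * A 0 0 + B 0 0 - b * C 0 0.
Proof. by rewrite !mxE. Qed.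

Lemma key (R : realType) (nu sn ay au c m v x p : R) :
  0 < m -> 0 < sn -> nu = sn ^+ 2 -> ay != 0 -> au = ay * sn ->
  c = 2 * (ay ^+ 2 * sn ^+ 2) -> (p = 0 \/ p = 1) ->
  let w := ay * nu * (m^-1 * v) - au * x in
  let sS := nu * (v * m^-1 * v) + x * m * x - c^-1 * (w * (p * m * p) * w) in
  let d := Num.sqrt (1 - 1 / 2 * p) in
  let u := sn * (d * v) + m * (d * x) in
  let sH := u * m^-1 * u in
  [/\ 0 <= 2 * sS - sH, 2 * (sn * (v * x)) <= 3 * sH - sS &
      (2 * (sn * (v * x)) + x * m * x) / 4 <= sH].
Proof.
move=> m0 sn0 hnu ay0 hau hc hp w sS d u sH.
have mn : m != 0 by rewrite gt_eqF.
have snn : sn != 0 by rewrite gt_eqF.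
pose b := sn * v / m.
have hv : v = m * b / sn by rewrite /b; field; apply/andP; split.
have hd : d ^+ 2 = 1 - 1 / 2 * p by rewrite sqr_sqrtr //; case: hp => ->; lra.
have eH : sH = d ^+ 2 * (m * (b + x) ^+ 2).
  by rewrite /sH /u hv; field; rewrite ?mn ?snn ?ay0.
have ew : 2 * (sn * (v * x)) = 2 * (m * b * x) by rewrite hv; field; rewrite ?mn ?snn.
have eS : sS = m * (b ^+ 2 + x ^+ 2) - p * (m * (b - x) ^+ 2 / 2).
  rewrite /sS /w hau hc hnu hv; case: hp => ->; field; by rewrite ?mn ?ay0 ?snn.
rewrite ew eH eS hd.
have hx : x * m * x = m * x ^+ 2 by ring.
rewrite hx.
have h1 := mulr_ge0 (ltW m0) (sqr_ge0 (b - x)).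
have h2 := mulr_ge0 (ltW m0) (sqr_ge0 (b + x)).
have h3 := mulr_ge0 (ltW m0) (sqr_ge0 (b + 3/4 * x)).
have h4 := mulr_ge0 (ltW m0) (sqr_ge0 x).
have h5 := mulr_ge0 (ltW m0) (sqr_ge0 (b + 1/2 * x)).
have h6 := mulr_ge0 (ltW m0) (sqr_ge0 b).
case: hp => ->; split; nra.
Qed.

Theorem proposition4p6 (R : realType) (n : nat) (nu alpha_u alpha_y : R)
  (m p : 'rV[R]_n) (L : 'M[R]_n) :
  (0 < n)%N ->
  0 < nu ->
  0 <= alpha_u -> 0 <= alpha_y -> 0 < Num.max alpha_u alpha_y ->
  (forall i, 0 < m 0 i) ->
  psd (L + L^T) ->
  (forall i, p 0 i = 0 \/ p 0 i = 1) ->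
  let M := diag_mx m in
  let Pi := diag_mx p in
  let gamma1 := alpha_y ^+ 2 * nu / (alpha_y ^+ 2 * nu + alpha_u ^+ 2) in
  let gamma2 := alpha_u ^+ 2 / (alpha_y ^+ 2 * nu + alpha_u ^+ 2) in
  gamma1 = 1 / 2 -> gamma2 = 1 / 2 ->
  let K := alpha_y * nu *: (L *m invmx M) - alpha_u *: 1%:M in
  let S := nu *: (L *m invmx M *m L^T) + M
           - (alpha_y ^+ 2 * nu + alpha_u ^+ 2)^-1 *: (K *m Pi *m M *m Pi *m K^T) in
  let L1 := Num.sqrt nu *: (L *m diag_sqrt (1%:M - gamma1 *: Pi))
            + diag_sqrt (1%:M - gamma2 *: Pi) *m M in
  let Shat := L1 *m invmx M *m L1^T in
  forall lambda : R, pencil_eigenvalue S Shat lambda ->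
  1 / 2 <= lambda <= 3.
Proof.
move=> _ nu0 au0 ay0 max0 m0 psdL p01 M Pi g1 g2 hg1 hg2 K S L1 Shat lam [x x0 Hx].
pose c := alpha_y ^+ 2 * nu + alpha_u ^+ 2.
have cn : c != 0.
  apply/eqP => c0; move: hg1; rewrite /g1 -/c c0 invr0 mulr0 => /eqP.
  by rewrite eq_sym mulf_eq0 oner_eq0 invr_eq0 /= pnatr_eq0.
have hay : alpha_y ^+ 2 * nu = c / 2.
  by move: hg1; rewrite /g1 -/c => /(congr1 (fun t => t * c)); rewrite divfK // => ->; rewrite mulrC mul1r.
have hau : alpha_u ^+ 2 = c / 2.
  by move: hg2; rewrite /g2 -/c => /(congr1 (fun t => t * c)); rewrite divfK // => ->; rewrite mulrC mul1r.
pose sn := Num.sqrt nu.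
have sn0 : 0 < sn by rewrite sqrtr_gt0.
have hnu : nu = sn ^+ 2 by rewrite sqr_sqrtr // ltW.
have ayn : alpha_y != 0.
  apply/eqP => a0; move: hay; rewrite a0 expr0n /= mul0r => /esym/eqP.
  by rewrite mulf_eq0 (negbTE cn) invr_eq0 pnatr_eq0.
have hau' : alpha_u = alpha_y * sn.
  apply/eqP; rewrite -(@eqrXn2 _ 2) //; last exact: mulr_ge0 ay0 (ltW sn0).
  by rewrite exprMn -hnu hay hau.
have hc : c = 2 * (alpha_y ^+ 2 * sn ^+ 2).
  by rewrite -hnu hay; field.
pose mi := \row_i (m 0 i)^-1.
have MiE : invmx M = diag_mx mi by apply: invmx_diag => i; rewrite gt_eqF.
pose d := \row_i Num.sqrt (1 - 1 / 2 * p 0 i).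
have L1E : L1 = sn *: (L *m diag_mx d) + diag_mx d *m M.
  by rewrite /L1 hg1 hg2 !diag_sqrt_E.
pose v := L^T *m x.
have tL : x^T *m L = v^T by rewrite trmx_mul trmxK.
pose w := K^T *m x.
have tK : x^T *m K = w^T by rewrite trmx_mul trmxK.
pose u := L1^T *m x.
have tU : x^T *m L1 = u^T by rewrite trmx_mul trmxK.
have wE : forall i, w i 0 = alpha_y * nu * ((m 0 i)^-1 * v i 0) - alpha_u * x i 0.
  move=> i; rewrite /w /K MiE raddfB /= !linearZ /= trmx_mul tr_diag_mx trmx1.
  rewrite mulmxDl -!scalemxAl mulNmx mul1mx -mulmxA mul_diag_mx !mxE mulrN //.
have uE : forall i, u i 0 = sn * (Num.sqrt (1 - 1 / 2 * p 0 i) * v i 0)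
                          + m 0 i * (Num.sqrt (1 - 1 / 2 * p 0 i) * x i 0).
  move=> j; rewrite /u L1E raddfD /= !linearZ /= !trmx_mul !tr_diag_mx.
  by rewrite mulmxDl -!scalemxAl -!mulmxA !mul_diag_mx !mxE.
have E : (x^T *m S *m x) 0 0 = lam * (x^T *m Shat *m x) 0 0.
  by rewrite -mulmxA Hx -scalemxAr -mulmxA mxE.
have QS : (x^T *m S *m x) 0 0 = \sum_i (nu * (v i 0 * (m 0 i)^-1 * v i 0)
    + x i 0 * m 0 i * x i 0
    - c^-1 * (w i 0 * (p 0 i * m 0 i * p 0 i) * w i 0)).
  have A1 : x^T *m (L *m invmx M *m L^T) *m x = v^T *m diag_mx mi *m v.
    by rewrite MiE !mulmxA tL.
  have A3 : x^T *m (K *m Pi *m M *m Pi *m K^T) *m x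
      = w^T *m diag_mx (\row_i (p 0 i * m 0 i * p 0 i)) *m w.
    have PMP : Pi *m M *m Pi = diag_mx (\row_i (p 0 i * m 0 i * p 0 i)).
      by rewrite !mulmx_diag; congr diag_mx; apply/rowP => i; rewrite !mxE.
    by rewrite -PMP !mulmxA tK.
  rewrite /S mulmxBr mulmxDr mulmxBl mulmxDl -!scalemxAr -!scalemxAl A1 A3.
  rewrite -/c /M.
  rewrite mx11_comb !qf_diag mulr_sumr mulr_sumr -big_split -sumrB /=.
  by apply: eq_bigr => i _; rewrite !mxE.
have QH : (x^T *m Shat *m x) 0 0 = \sum_i (u i 0 * (m 0 i)^-1 * u i 0).
  rewrite /Shat MiE !mulmxA tU -mulmxA qf_diag.
  by apply: eq_bigr => i _; rewrite [mi 0 i]mxE.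
have P : 0 <= \sum_i v i 0 * x i 0.
  have h := psdL x.
  have e : (x^T *m (L + L^T) *m x) 0 0 = 2 * \sum_i v i 0 * x i 0.
    rewrite mulmxDr mulmxDl tL -(mulmxA _ L^T x) mxE !mxE.
    rewrite -[2]/(1+1) mulrDl mul1r; congr (_ + _); apply: eq_bigr => j _.
      by rewrite [v^T 0 j]mxE.
    by rewrite [x^T 0 j]mxE mulrC.
  by move: h; rewrite e; lra.
have Px : 0 < \sum_i x i 0 * m 0 i * x i 0.
  have ge : forall i : 'I_n, true -> 0 <= x i 0 * m 0 i * x i 0.
    by move=> i _; have := m0 i; nra.
  rewrite lt_def sumr_ge0 // andbT.
  apply: contra x0 => /eqP /psumr_eq0P H; apply/eqP/matrixP => i j.
  rewrite (ord1 j) mxE; move: (H ge i isT) => /eqP; rewrite !mulf_eq0 (gt_eqF (m0 i)) orbF orbb => /eqP -> //.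
have Ks := fun i => @key R nu sn alpha_y alpha_u c (m 0 i) (v i 0) (x i 0) (p 0 i)
  (m0 i) sn0 hnu ayn hau' hc (p01 i).
have s1 : 0 <= 2 * (x^T *m S *m x) 0 0 - (x^T *m Shat *m x) 0 0.
  rewrite QS QH mulr_sumr -sumrB; apply: sumr_ge0 => i _.
  by rewrite wE uE; case: (Ks i) => k1 _ _; exact: k1.
have s2 : 2 * (sn * \sum_i v i 0 * x i 0)
    <= 3 * (x^T *m Shat *m x) 0 0 - (x^T *m S *m x) 0 0.
  rewrite QS QH !mulr_sumr -sumrB; apply: ler_sum => i _.
  by rewrite wE uE; case: (Ks i) => _ k2 _; exact: k2.
have s3 : (2 * (sn * \sum_i v i 0 * x i 0) + \sum_i x i 0 * m 0 i * x i 0) / 4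
    <= (x^T *m Shat *m x) 0 0.
  rewrite QH !mulr_sumr -big_split mulr_suml; apply: ler_sum => i _.
  by rewrite uE; case: (Ks i) => _ _ k3; exact: k3.
have P2 : 0 <= sn * \sum_i v i 0 * x i 0 by rewrite mulr_ge0 // ltW.
move: E s1 s2 s3 P2 Px.
set A := (x^T *m S *m x) 0 0; set B := (x^T *m Shat *m x) 0 0.
set T := sn * _; set U := \sum_i _.
move=> E s1 s2 s3 P2 Px.
have B0 : 0 < B by lra.
rewrite E in s1 s2; apply/andP; split; nra.
Qed.
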